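(* Let $N\ge 2$ and $\beta\in\{2,4\}$. (Complex case, $\beta=2$.) Let $R=[\rho_{jk}]$ range over $N\times N$ complex correlation matrices (Hermitian positive definite with all diagonal entries equal to $1$), with Cholesky factorisation $R=LL^*$, $L=[l_{jk}]$ lower triangular with $l_{jj}>0$. Parametrise $L$ by angles $\theta_{jp}\in(0,\pi)$, $2\le j\le N$, $1\le p\le 2j-2$, via $$l_{jk}=\left(\cos\theta_{j,2k-1}+i\cos\theta_{j,2k}\sin\theta_{j,2k-1}\right)\prod_{p=1}^{2k-2}\sin\theta_{jp}\ \ (1\le k\le j-1),\qquad l_{jj}=\prod_{p=1}^{2j-2}\sin\theta_{jp},$$ and $l_{11}=1$. Then the absolute value of the Jacobian determinant of the map from the angles $\{\theta_{jp}\}$ to the real coordinates $\{\mathrm{Re}\,\rho_{jk},\mathrm{Im}\,\rho_{jk}\}_{1\le k<j\le N}$ is $$\prod_{j=2}^{N}\prod_{p=1}^{2j-2}\left(\sin\theta_{jp}\right)^{2N-p-1}.$$ (Quaternion case, $\beta=4$.) Let $R$ range over $N\times N$ quaternion correlation matrices: $2N\times 2N$ complex Hermitian positive definite matrices composed of $2\times2$ blocks of the form $\begin{bmatrix}z&w\\-\bar w&\bar z\end{bmatrix}$, with all diagonal blocks equal to the $2\times 2$ identity. Write $R=LL^*$ with $L$ block lower triangular of the same block form, whose diagonal blocks are positive multiples $l_{jj}I_2$ of the identity. For an off-diagonal block $l_{jk}$ with parameters $(z,w)$ write $l_{jk}^{(1)}=\mathrm{Re}\,z$, $l_{jk}^{(2)}=\mathrm{Im}\,z$,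 $l_{jk}^{(3)}=\mathrm{Re}\,w$, $l_{jk}^{(4)}=\mathrm{Im}\,w$. Parametrise by angles $\theta_{jp}\in(0,\pi)$, $2\le j\le N$, $1\le p\le 4j-4$, via $$l_{jk}^{(s)}=\cos\theta_{j,4(k-1)+s}\left(\prod_{m=1}^{s-1}\sin\theta_{j,4(k-1)+m}\right)\prod_{p=1}^{4(k-1)}\sin\theta_{jp}\ \ (1\le k\le j-1,\ 1\le s\le 4),\qquad l_{jj}=\prod_{p=1}^{4(j-1)}\sin\theta_{jp},$$ and $l_{11}=1$. Then the absolute value of the Jacobian determinant of the map from the angles $\{\theta_{jp}\}$ to the four real coordinates of each block $\rho_{jk}$, $1\le k<j\le N$, of $R$ is $$\prod_{j=2}^{N}\prod_{p=1}^{4j-4}\left(\sin\theta_{jp}\right)^{4N-p-3}.$$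
   Context: Empty products equal $1$. $L^*$ denotes the conjugate transpose. The hyperspherical parametrisations above are bijections from the open cube of angles onto the set of possible Cholesky factors of correlation matrices (each row of $L$ being a unit vector of real coordinates with positive last coordinate $l_{jj}$). *)

(* Defs.v *)
From HB Require Import structures.
From mathcomp Require Import all_boot all_order all_algebra.
From mathcomp Require Import all_classical all_reals.
From mathcomp Require Import topology normedtype derive trigo.
From mathcomp Require Import complex.

Set Implicit Arguments.
Unset Strict Implicit.
Unset Printing Implicit Defensive.
Import Order.TTheory GRing.Theory Num.Theory numFieldNormedType.Exports.
Local Open Scope ring_scope.

Section Defs.
Variable R : realType.

(* Angles are given as a family theta : nat -> nat -> R, theta j p = θ_{jp}
   (paper's 1-based indices); only the values with 2 <= j <= N and
   1 <= p <= d(j-1) (d = β = 2 or 4) are used. *)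
Definition angles := nat -> nat -> R.

Definition angle_idx (d N : nat) : seq (nat * nat) :=
  flatten [seq [seq (j, p) | p <- iota 1 (d * (j - 1))] | j <- iota 2 (N - 1)].

Definition upd (th : angles) (j p : nat) (t : R) : angles :=
  fun j' p' => if (j' == j) && (p' == p) then t else th j' p'.

Definition pderiv (G : angles -> R) (th : angles) (j p : nat) : R :=
  derive1 (fun t => G (upd th j p t)) (th j p).

(* Jacobian matrix of the map F (whose output coordinates are labelled by the
   same index set idx as the input angles) ; row a = output coordinate
   labelled nth a, column b = derivative w.r.t. θ labelled nth b. *)
Definition angle_jacobian (idx : seq (nat * nat)) (F : angles -> nat -> nat -> R)
    (th : angles) : 'M[R]_(size idx) :=
  \matrix_(a, b) pderiv (fun th' => F th' (nth (0,0)%N idx a).1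
                                         (nth (0,0)%N idx a).2)
                        th (nth (0,0)%N idx b).1 (nth (0,0)%N idx b).2.

Definition lC (th : angles) (j k : nat) : R[i] :=
  if (k < j)%N then
    Complex (cos (th j (2 * k - 1)%N))
            (cos (th j (2 * k)%N) * sin (th j (2 * k - 1)%N)) *
    (\prod_(1 <= p < (2 * k - 2).+1) sin (th j p))%:C%C
  else if k == j then (\prod_(1 <= p < (2 * j - 2).+1) sin (th j p))%:C%C
  else 0.

Definition LC (N : nat) (th : angles) : 'M[R[i]]_N :=
  \matrix_(a, b) lC th a.+1 b.+1.

Definition RC (N : nat) (th : angles) : 'M[R[i]]_N :=
  LC N th *m (map_mx (@conjc R) (LC N th))^T.

(* entry (i,j) (0-based nat indices) of a matrix, 0 if out of range *)
Definition mx_at (T : pzRingType) (m n : nat) (A : 'M[T]_(m, n)) (i j : nat) : T :=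
  match insub i, insub j with
  | Some i', Some j' => A i' j'
  | _, _ => 0
  end.

Definition rhoC (N : nat) (th : angles) (j k : nat) : R[i] :=
  mx_at (RC N th) j.-1 k.-1.

(* output coordinate labelled (j,p), p = 2(k-1)+s : s=1 Re ρ_{jk}, s=2 Im ρ_{jk} *)
Definition coordC (N : nat) (th : angles) (j p : nat) : R :=
  let k := ((p - 1) %/ 2).+1 in
  if ((p - 1) %% 2 == 0)%N then complex.Re (rhoC N th j k) else complex.Im (rhoC N th j k).

Definition lQ (th : angles) (j k s : nat) : R :=
  cos (th j (4 * (k - 1) + s)%N) *
  (\prod_(1 <= m < s) sin (th j (4 * (k - 1) + m)%N)) *
  \prod_(1 <= p < (4 * (k - 1)).+1) sin (th j p).

Definition lQdiag (th : angles) (j : nat) : R :=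
  \prod_(1 <= p < (4 * (j - 1)).+1) sin (th j p).

Definition qblock (z w : R[i]) (a b : nat) : R[i] :=
  match a, b with
  | 0, 0 => z
  | 0, _ => w
  | _, 0 => - conjc w
  | _, _ => conjc z
  end%N.

Definition LQblock (th : angles) (j k : nat) (a b : nat) : R[i] :=
  if (k < j)%N then
    qblock (Complex (lQ th j k 1) (lQ th j k 2))
           (Complex (lQ th j k 3) (lQ th j k 4)) a b
  else if k == j then qblock (lQdiag th j)%:C%C 0 a b
  else 0.

(* the 2N x 2N complex matrix L; row index r is in block r/2 + 1, position r%2 *)
Definition LQ (N : nat) (th : angles) : 'M[R[i]]_(2 * N) :=
  \matrix_(r, c) LQblock th (r %/ 2).+1 (c %/ 2).+1 (r %% 2) (c %% 2).

Definition RQ (N : nat) (th : angles) : 'M[R[i]]_(2 * N) :=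
  LQ N th *m (map_mx (@conjc R) (LQ N th))^T.

Definition rhoQz (N : nat) (th : angles) (j k : nat) : R[i] :=
  mx_at (RQ N th) (2 * (j - 1)) (2 * (k - 1)).
Definition rhoQw (N : nat) (th : angles) (j k : nat) : R[i] :=
  mx_at (RQ N th) (2 * (j - 1)) (2 * (k - 1)).+1.

(* output coordinate labelled (j,p), p = 4(k-1)+s :
   s=1 Re z, s=2 Im z, s=3 Re w, s=4 Im w of the block rho_{jk} *)
Definition coordQ (N : nat) (th : angles) (j p : nat) : R :=
  let k := ((p - 1) %/ 4).+1 in
  match ((p - 1) %% 4)%N with
  | 0 => complex.Re (rhoQz N th j k)
  | 1 => complex.Im (rhoQz N th j k)
  | 2 => complex.Re (rhoQw N th j k)
  | _ => complex.Im (rhoQw N th j k)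
  end%N.

End Defs.

(* Main.v *)
Require Import Defs.
From HB Require Import structures.
From mathcomp Require Import all_boot all_order all_algebra.
From mathcomp Require Import all_classical all_reals.
From mathcomp Require Import topology normedtype derive trigo.
From mathcomp Require Import complex.
From mathcomp Require Import zify ring lra.
Import Order.TTheory GRing.Theory Num.Theory numFieldNormedType.Exports.
Local Open Scope ring_scope.


Section Prods.
Variable R : comNzRingType.

Lemma prodA (a : nat -> R) n :
  \prod_(1 <= p < n.+1) \prod_(1 <= q < p.+1) a q =
  \prod_(1 <= q < n.+1) a q ^+ (n.+1 - q).
Proof.
elim: n => [|n IH]; first by rewrite !big_geq.
rewrite big_nat_recr //= IH [in RHS]big_nat_recr //= subSnn expr1.
rewrite [in X in _ * X]big_nat_recr //= mulrA; congr (_ * _).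
rewrite -big_split /=; apply: eq_big_nat => q /andP[h1 h2].
by rewrite (subSn (ltnW h2)) exprS mulrC.
Qed.

Lemma prodB (f : nat -> R) d n : (0 < d)%N ->
  \prod_(1 <= p < (d * n).+1) f ((p - 1) %/ d).+1 =
  \prod_(1 <= k < n.+1) f k ^+ d.
Proof.
move=> d0; rewrite big_add1 /=.
elim: n => [|n IH]; first by rewrite muln0 !big_geq.
rewrite (big_cat_nat _ (n := d * n)) /=; [|lia|lia].
rewrite IH [in RHS]big_nat_recr //=; congr (_ * _).
rewrite (eq_big_nat _ _ (F2 := fun=> f n.+1)).
  by rewrite prodr_const_nat; congr (_ ^+ _); lia.
move=> p /andP[h1 h2]; congr (f _.+1).
have -> : (p.+1 - 1 = n * d + (p - d * n))%N by lia.
rewrite divnMDl // divn_small ?addn0 //; lia.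
Qed.

Lemma prodC (b : nat -> R) N :
  \prod_(1 <= j < N.+1) \prod_(1 <= k < j) b k =
  \prod_(1 <= k < N.+1) b k ^+ (N - k).
Proof.
elim: N => [|N IH]; first by rewrite !big_geq.
rewrite big_nat_recr //= IH [in RHS]big_nat_recr //= subnn expr0 mulr1.
rewrite -big_split /=; apply: eq_big_nat => q /andP[h1 h2].
have -> : (N.+1 - q = (N - q).+1)%N by lia.
by rewrite exprS mulrC.
Qed.

End Prods.
Lemma ar (d N j p : nat) : (0 < d)%N -> (2 <= j <= N)%N -> (1 <= p <= d * (j-1))%N ->
   (d * N - p - (d - 1) = ((d * (j-1)).+1 - p) + d * (N - j))%N.
Proof. move=> *. 
have e1: (d*(j-1) = d*j - d)%N by rewrite mulnBr muln1.
have e2: (d*(N-j) = d*N - d*j)%N by rewrite mulnBr.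
have e3: (d*j <= d*N)%N by rewrite leq_mul2l; lia.
have e4: (d <= d*j)%N by rewrite leq_pmulr; lia.
lia. Qed.

Section Final.
Variable R : comNzRingType.
Lemma prodFinal (a : nat -> nat -> R) d N : (0 < d)%N -> (2 <= N)%N ->
  \prod_(2 <= j < N.+1) \prod_(1 <= p < (d * (j - 1)).+1)
     ((\prod_(1 <= q < (d * ((p - 1) %/ d)).+1) a ((p - 1) %/ d).+1 q) *
      (a j p * \prod_(1 <= q < p) a j q))
  = \prod_(2 <= j < N.+1) \prod_(1 <= p < (d * (j - 1)).+1)
      a j p ^+ (d * N - p - (d - 1)).
Proof.
move=> d0 N2.
pose S k := \prod_(1 <= q < (d * k.-1).+1) a k q.
pose P2 j := \prod_(1 <= q < (d * (j - 1)).+1) a j q ^+ ((d * (j - 1)).+1 - q).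
transitivity (\prod_(2 <= j < N.+1) ((\prod_(1 <= k < j) S k ^+ d) * P2 j)).
  apply: eq_big_nat => j /andP[j2 jN].
  rewrite (eq_big_nat _ _ (F2 := fun p => S ((p - 1) %/ d).+1 *
             \prod_(1 <= q < p.+1) a j q)); last first.
    move=> p /andP[p1 _]; rewrite [in RHS]big_nat_recr //= [_ * a j p]mulrC.
    by [].
  rewrite big_split /= /P2 -prodA; congr (_ * _).
  rewrite (@prodB R (fun k => S k)) //.
  by have -> : (j - 1).+1 = j by lia.
transitivity (\prod_(2 <= j < N.+1) ((S j ^+ d) ^+ (N - j) * P2 j)); last first.
  apply: eq_big_nat => j /andP[j2 jN].
  rewrite /P2 /S -!prodrXl -subn1 -big_split /=; apply: eq_big_nat => p /andP[p1 pj].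
  rewrite -exprM -exprD addnC -ar //; lia.
rewrite !big_split /=; congr (_ * _).
have h1 : \prod_(2 <= j < N.+1) \prod_(1 <= k < j) S k ^+ d =
          \prod_(1 <= j < N.+1) \prod_(1 <= k < j) S k ^+ d.
  rewrite [in RHS]big_ltn; last lia. have -> : \prod_(1 <= k < 1) S k ^+ d = 1 by rewrite big_geq. by rewrite mul1r.
rewrite h1 prodC [in LHS]big_ltn; last lia.
have -> : S 1%N = 1 by rewrite /S muln0 big_geq. by rewrite !expr1n mul1r.
Qed.
End Final.

Section Gen.
Variable R : realType.
Implicit Types th : angles R.

Definition xx th (j q : nat) : R :=
  cos (th j q) * \prod_(1 <= q' < q) sin (th j q').
Definition ss th (k n : nat) : R := \prod_(1 <= q < n.+1) sin (th k q).

Lemma upd_ne th j' p' t j q : (j != j') || (q != p') -> upd th j' p' t j q = th j q.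
Proof. by rewrite /upd; case/orP => /negbTE ->; rewrite ?andbF. Qed.

Lemma xx_upd th j' p' t j q : (j != j') || (q < p')%N ->
  xx (upd th j' p' t) j q = xx th j q.
Proof.
move=> h; rewrite /xx upd_ne; last first.
  by case/orP: h => [->//|h]; apply/orP; right; rewrite neq_ltn h.
congr (_ * _); apply: eq_big_nat => q' /andP[_ hq]; rewrite upd_ne //.
by case/orP: h => [->//|h]; apply/orP; right; rewrite neq_ltn (ltn_trans hq h).
Qed.

Lemma ss_upd th j' p' t k n : (k != j') || (n < p')%N ->
  ss (upd th j' p' t) k n = ss th k n.
Proof.
move=> h; rewrite /ss; apply: eq_big_nat => q' /andP[_ hq]; rewrite upd_ne //.
by case/orP: h => [->//|h]; apply/orP; right; rewrite neq_ltn (leq_ltn_trans _ h).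
Qed.

Lemma xx_upd_self th j p t :
  xx (upd th j p t) j p = cos t * \prod_(1 <= q < p) sin (th j q).
Proof.
rewrite /xx /upd !eqxx /=; congr (_ * _); apply: eq_big_nat => q /andP[_ hq].
by rewrite (ltn_eqF hq).
Qed.

Lemma mem_angle_idx d N j p :
  ((j, p) \in angle_idx d N) = (2 <= j <= N)%N && (1 <= p <= d * (j - 1))%N.
Proof.
apply/flatten_mapP/andP.
  case=> j0; rewrite mem_iota => hj0 /mapP [p0]; rewrite mem_iota => hp [-> ->].
  split; lia.
case=> hj hp; exists j; first by rewrite mem_iota; lia.
by apply/mapP; exists p; first by rewrite mem_iota; lia.
Qed.

Definition lexlt : rel (nat * nat) :=
  fun x y => (x.1 < y.1)%N || ((x.1 == y.1) && (x.2 < y.2)%N).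

Lemma pairwise_idx d N : pairwise lexlt (angle_idx d N).
Proof.
rewrite /angle_idx; elim: (N - 1)%N 2%N => [//|n IH] a /=.
rewrite pairwise_cat IH andbT; apply/andP; split.
  apply/allrelP => x y /mapP[p _ ->] /flatten_mapP[j hj /mapP[q _ ->]].
  by move: hj; rewrite mem_iota /lexlt /= => hj; apply/orP; left; lia.
rewrite pairwise_map; apply: (sub_pairwise (r := ltn)).
  by move=> p q /= h; rewrite /lexlt /= eqxx h orbT.
by rewrite -sorted_pairwise ?iota_ltn_sorted //; apply: ltn_trans.
Qed.

Lemma det_tri (F : angles R -> nat -> nat -> R) d N th :
  (forall j p j' p' t, (j, p) \in angle_idx d N -> (j', p') \in angle_idx d N ->
     lexlt (j, p) (j', p') -> F (upd th j' p' t) j p = F th j p) ->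
  \det (angle_jacobian (angle_idx d N) F th) =
  \prod_(x <- angle_idx d N) pderiv (fun th' => F th' x.1 x.2) th x.1 x.2.
Proof.
move=> H; rewrite det_trig; last first.
  apply/forallP => a; apply/forallP => b; apply/implyP => hab; rewrite mxE /pderiv.
  have hx : nth (0,0)%N (angle_idx d N) a \in angle_idx d N := mem_nth _ (ltn_ord a).
  have hy : nth (0,0)%N (angle_idx d N) b \in angle_idx d N := mem_nth _ (ltn_ord b).
  have lt : lexlt (nth (0,0)%N (angle_idx d N) a) (nth (0,0)%N (angle_idx d N) b).
    exact: (pairwiseP (0,0)%N (pairwise_idx d N)) (ltn_ord a) (ltn_ord b) hab.
  move: hx hy lt.
  case: (nth (0,0)%N (angle_idx d N) a) => j p; case: (nth (0,0)%N (angle_idx d N) b) => j' p'.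
  move=> hx hy lt /=.
  have -> : (fun t => F (upd th j' p' t) j p) = fun=> F th j p.
    by apply: funext => t; apply: H.
  by apply/eqP; exact: derive1_cst.
rewrite (big_nth (0,0)%N) big_mkord; apply: eq_bigr => i _; by rewrite mxE.
Qed.

Lemma dac (C K x : R) : derive1 (fun t => C + K * cos t) x = - (K * sin x).
Proof.
rewrite derive1E.
have h : is_derive x 1 (fun t => C + K * cos t) (0 + K *: (- sin x)).
  exact: is_deriveD.
by rewrite derive_val add0r /GRing.scale /= mulrN.
Qed.


Lemma generic d N (F : angles R -> nat -> nat -> R) th : (0 < d)%N -> (2 <= N)%N ->
  (forall j p, (2 <= j <= N)%N -> (1 <= p <= d * (j - 1))%N -> 0 < th j p < pi) ->
  (forall j p, (2 <= j <= N)%N -> (1 <= p <= d * (j - 1))%N ->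
     exists G : angles R -> R,
       (forall th', F th' j p = G th' + ss th' ((p-1) %/ d).+1 (d * ((p-1) %/ d)) * xx th' j p) /\
       (forall th' j' p' t, j' != ((p-1) %/ d).+1 -> (j' != j) || (d * ((p-1) %/ d) < p')%N ->
          G (upd th' j' p' t) = G th')) ->
  `|\det (angle_jacobian (angle_idx d N) F th)| =
   \prod_(2 <= j < N.+1) \prod_(1 <= p < (d * (j - 1)).+1) sin (th j p) ^+ (d * N - p - (d - 1)).
Proof.
move=> d0 N2 hth HGex.
have kfacts : forall j p, (2 <= j)%N -> (1 <= p <= d * (j - 1))%N ->
   ((p-1) %/ d < j - 1)%N /\ (d * ((p-1) %/ d) <= p - 1)%N.
  move=> j p hj hp; split; first by rewrite ltn_divLR // mulnC; lia.
  by rewrite mulnC leq_trunc_div.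
rewrite det_tri; last first.
  move=> j p j' p' t; rewrite !mem_angle_idx => /andP[hj hp] /andP[hj' hp'] lt.
  have [G [HF HG]] := HGex j p hj hp.
  have [k1 k2] : ((p-1) %/ d < j - 1)%N /\ (d * ((p-1) %/ d) <= p - 1)%N.
    by apply: kfacts => //; case/andP: hj.
  move: lt; rewrite /lexlt /= => lt.
  rewrite !HF HG ?ss_upd ?xx_upd //; lia.
rewrite normr_prod /angle_idx big_flatten /= big_map.
have E1 : iota 2 (N - 1)%N = index_iota 2 N.+1 by rewrite /index_iota; congr iota; lia.
rewrite E1 -(@prodFinal R (fun j q => sin (th j q))) //.
apply: eq_big_nat => j hj; rewrite big_map.
have E2 : iota 1 (d * (j - 1))%N = index_iota 1 (d * (j - 1)).+1 by rewrite /index_iota subSS subn0.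
rewrite E2; apply: eq_big_nat => p hp /=.
have hj' : (2 <= j <= N)%N by lia.
have hp' : (1 <= p <= d * (j - 1))%N by lia.
have [G [HF HG]] := HGex j p hj' hp'.
have [k1 k2] : ((p-1) %/ d < j - 1)%N /\ (d * ((p-1) %/ d) <= p - 1)%N.
  by apply: kfacts => //; case/andP: hj'.
rewrite /pderiv.
set S := ss th ((p - 1) %/ d).+1 (d * ((p - 1) %/ d)).
set P := \prod_(1 <= q < p) sin (th j q).
have -> : (fun t => F (upd th j p t) j p) = fun t => G th + (S * P) * cos t.
  apply: funext => t; rewrite HF HG ?ss_upd ?xx_upd_self; last 3 first.
  - lia.
  - lia.
  - lia.
  rewrite /S /P; ring.
rewrite dac normrN ger0_norm.
  by rewrite /S /ss /P; ring.
have P0 : 0 <= P.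
  rewrite /P big_seq_cond; apply: prodr_ge0 => q; rewrite mem_index_iota andbT => hq.
  by apply/ltW/sin_gt0_pi/hth; lia.
have S0 : 0 <= S.
  rewrite /S /ss big_seq_cond; apply: prodr_ge0 => q; rewrite mem_index_iota andbT.
  move: k1 k2; case E: ((p - 1) %/ d)%N => [|m] k1 k2 hq.
    by move: hq; rewrite muln0; lia.
  by apply/ltW/sin_gt0_pi/hth; lia.
have T0 : 0 <= sin (th j p) by apply/ltW/sin_gt0_pi/hth.
by rewrite !mulr_ge0.
Qed.

End Gen.
Arguments xx {R}. Arguments ss {R}. Arguments upd_ne {R}.

Section Cplx.
Variable R : realType.
Implicit Types th : angles R.

Lemma mx_atE (T : pzRingType) m n (A : 'M[T]_(m, n)) i j (hi : (i < m)%N) (hj : (j < n)%N) :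
  mx_at A i j = A (Ordinal hi) (Ordinal hj).
Proof.
rewrite /mx_at; case: insubP => [i' _ ei|]; last by rewrite hi.
case: insubP => [j' _ ej|]; last by rewrite hj.
by congr (A _ _); apply: val_inj.
Qed.

Lemma mulC_real (a b s : R) : (a +i* b)%C * s%:C%C = ((a * s) +i* (b * s))%C.
Proof.
by rewrite -[((a +i* b) * s%:C)%C]/((a * s - b * 0) +i* (a * 0 + b * s))%C !mulr0 subr0 add0r.
Qed.

Lemma conjC_real (s : R) : (s%:C)^*%C = s%:C%C :> R[i].
Proof. by rewrite /conjc /= oppr0. Qed.

Lemma ReD (x y : R[i]) : complex.Re (x + y) = complex.Re x + complex.Re y.
Proof. by case: x; case: y. Qed.
Lemma ImD (x y : R[i]) : complex.Im (x + y) = complex.Im x + complex.Im y.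
Proof. by case: x; case: y. Qed.

Lemma lC_ext th1 th2 j m : (forall q, (q <= 2 * m)%N -> th1 j q = th2 j q) ->
  lC th1 j m = lC th2 j m.
Proof.
move=> H; rewrite /lC.
have Hp : forall n, (n <= 2 * m)%N ->
    \prod_(1 <= p < n.+1) sin (th1 j p) = \prod_(1 <= p < n.+1) sin (th2 j p).
  by move=> n hn; apply: eq_big_nat => q hq; rewrite H //; lia.
case: ifP => h1.
  by rewrite !H ?Hp //; lia.
case: ifP => h2 //.
by rewrite Hp //; move/eqP: h2 => ->; lia.
Qed.

Lemma lC_zero th k m : (k < m)%N -> lC th k m = 0.
Proof. by move=> h; rewrite /lC ltnNge (ltnW h) /= gtn_eqF. Qed.

Lemma lC_diag th k : lC th k.+1 k.+1 = (ss th k.+1 (2 * k))%:C%C.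
Proof.
rewrite /lC ltnn eqxx /ss; do 3 congr _.
by have -> : (2 * k.+1 - 2 = 2 * k)%N by lia.
Qed.

Lemma lC_form th j m : (m.+1 < j)%N ->
  lC th j m.+1 = ((xx th j (2 * m).+1) +i* (xx th j (2 * m).+2))%C.
Proof.
move=> h; rewrite /lC h.
have -> : (2 * m.+1 - 1 = (2 * m).+1)%N by lia.
have -> : (2 * m.+1 - 2 = 2 * m)%N by lia.
have -> : (2 * m.+1 = (2 * m).+2)%N by lia.
rewrite mulC_real /xx; congr Complex.
by rewrite [in RHS]big_nat_recr //= ; ring.
Qed.

Definition GCc th j k : R[i] :=
  \sum_(0 <= m < k) lC th j m.+1 * (lC th k.+1 m.+1)^*%C.

Lemma rhoC_split N th j k : (1 <= j <= N)%N -> (k < N)%N ->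
  rhoC N th j k.+1 = GCc th j k + lC th j k.+1 * (ss th k.+1 (2 * k))%:C%C.
Proof.
move=> hj hk.
have hj' : (j.-1 < N)%N by lia.
rewrite /rhoC (@mx_atE _ _ _ _ _ _ hj' hk) /RC !mxE.
rewrite (eq_bigr (fun m : 'I_N => lC th j m.+1 * (lC th k.+1 m.+1)^*%C)); last first.
  by move=> m _; rewrite !mxE /= prednK //; lia.
rewrite -(big_mkord xpredT (fun m => lC th j m.+1 * (lC th k.+1 m.+1)^*%C)).
rewrite (big_cat_nat _ (n := k.+1)) //=.
have -> : \sum_(k.+1 <= m < N) lC th j m.+1 * (lC th k.+1 m.+1)^*%C = 0.
  rewrite big_nat_cond big1 // => m /andP[/andP[hkm _] _].
  by rewrite (@lC_zero th k.+1 m.+1) ?conjc0 ?mulr0.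
rewrite addr0.
by rewrite big_nat_recr //= lC_diag conjC_real.
Qed.

Lemma coordC_eq N th j p : (2 <= j <= N)%N -> (1 <= p <= 2 * (j - 1))%N ->
  coordC N th j p =
  (if ((p - 1) %% 2 == 0)%N then complex.Re (GCc th j ((p - 1) %/ 2))
   else complex.Im (GCc th j ((p - 1) %/ 2)))
  + ss th ((p - 1) %/ 2).+1 (2 * ((p - 1) %/ 2)) * xx th j p.
Proof.
move=> hj hp; rewrite /coordC /= rhoC_split; [|lia|lia].
rewrite lC_form; last by lia.
rewrite mulC_real; case: ifP => h.
  by rewrite ReD /= mulrC; congr (_ + _ * xx _ _ _); lia.
by rewrite ImD /= mulrC; congr (_ + _ * xx _ _ _); lia.
Qed.

Lemma GCc_upd th j k j' p' t : (j' != k.+1) -> (j' != j) || (2 * k < p')%N ->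
  GCc (upd th j' p' t) j k = GCc th j k.
Proof.
move=> h1 h2; rewrite /GCc; apply: eq_big_nat => m hm.
rewrite (@lC_ext (upd th j' p' t) th j); last first.
  move=> q hq; apply: upd_ne; rewrite eq_sym; case/orP: h2 => [->//|h2]; apply/orP; right; lia.
rewrite (@lC_ext (upd th j' p' t) th k.+1) //.
by move=> q hq; apply: upd_ne; rewrite eq_sym h1.
Qed.


Lemma complex_part N (th : angles R) : (2 <= N)%N ->
     (forall j p, (2 <= j <= N)%N -> (1 <= p <= 2 * (j - 1))%N ->
        0 < th j p < pi) ->
     `|\det (angle_jacobian (angle_idx 2 N) (coordC N) th)| =
       \prod_(2 <= j < N.+1) \prod_(1 <= p < (2 * j - 2).+1)
          sin (th j p) ^+ (2 * N - p - 1).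
Proof.
move=> N2 hth; rewrite (@generic R 2 N) //; last first.
  move=> j p hj hp.
  exists (fun th' => if ((p - 1) %% 2 == 0)%N then complex.Re (GCc th' j ((p - 1) %/ 2))
                    else complex.Im (GCc th' j ((p - 1) %/ 2))).
  split; first by move=> th'; rewrite coordC_eq.
  by move=> th' j' p' t h1 h2; rewrite GCc_upd.
apply: eq_big_nat => j hj.
by have -> : (2 * j - 2 = 2 * (j - 1))%N by lia.
Qed.
End Cplx.

Section Quat.
Variable R : realType.
Implicit Types th : angles R.

Lemma sum_pairs (V : nmodType) n (f : nat -> V) :
  \sum_(0 <= c < 2 * n) f c = \sum_(0 <= m < n) (f (2 * m)%N + f (2 * m).+1).
Proof.
elim: n => [|n IH]; first by rewrite !big_geq.
have -> : (2 * n.+1 = (2 * n).+2)%N by lia.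
by rewrite !big_nat_recr //= IH addrA.
Qed.

Lemma rhoQ_entry N th r c (hr : (r < 2 * N)%N) (hc : (c < 2 * N)%N) :
  mx_at (RQ N th) r c =
  \sum_(0 <= m < N)
    (LQblock th (r %/ 2).+1 m.+1 (r %% 2) 0 * (LQblock th (c %/ 2).+1 m.+1 (c %% 2) 0)^*%C +
     LQblock th (r %/ 2).+1 m.+1 (r %% 2) 1 * (LQblock th (c %/ 2).+1 m.+1 (c %% 2) 1)^*%C).
Proof.
rewrite (@mx_atE _ _ _ _ _ _ hr hc) /RQ !mxE.
rewrite (eq_bigr (fun i : 'I_(2 * N) =>
   LQblock th (r %/ 2).+1 (i %/ 2).+1 (r %% 2) (i %% 2) *
   (LQblock th (c %/ 2).+1 (i %/ 2).+1 (c %% 2) (i %% 2))^*%C)); last first.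
  by move=> i _; rewrite !mxE.
rewrite -(big_mkord xpredT (fun i =>
   LQblock th (r %/ 2).+1 (i %/ 2).+1 (r %% 2) (i %% 2) *
   (LQblock th (c %/ 2).+1 (i %/ 2).+1 (c %% 2) (i %% 2))^*%C)).
rewrite sum_pairs; apply: eq_big_nat => m _.
have e1 : ((2 * m) %/ 2 = m)%N by lia.
have e2 : ((2 * m) %% 2 = 0)%N by lia.
have e3 : ((2 * m).+1 %/ 2 = m)%N by lia.
have e4 : ((2 * m).+1 %% 2 = 1)%N by lia.
by rewrite e1 e2 e3 e4.
Qed.

Definition zq th j m := LQblock th j m 0 0.
Definition wq th j m := LQblock th j m 0 1.

Lemma C0E : (0 +i* 0)%C = 0 :> R[i]. Proof. by []. Qed.

Lemma LQ10 th k m : LQblock th k m 1 0 = - (wq th k m)^*%C.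
Proof.
rewrite /wq /LQblock; case: ifP => _ //=; case: ifP => _ //=.
by rewrite -C0E; apply/eqP; rewrite eq_complex /= !oppr0 !eqxx.
Qed.
Lemma LQ11 th k m : LQblock th k m 1 1 = (zq th k m)^*%C.
Proof.
rewrite /zq /LQblock; case: ifP => _ //=; case: ifP => _ //=; by rewrite !oppr0 C0E.
Qed.

Lemma zq_zero th k m : (k < m)%N -> zq th k m = 0.
Proof. by move=> h; rewrite /zq /LQblock ltnNge (ltnW h) /= gtn_eqF. Qed.
Lemma wq_zero th k m : (k < m)%N -> wq th k m = 0.
Proof. by move=> h; rewrite /wq /LQblock ltnNge (ltnW h) /= gtn_eqF. Qed.

Lemma zq_diag th k : zq th k.+1 k.+1 = (ss th k.+1 (4 * k))%:C%C.
Proof. by rewrite /zq /LQblock ltnn eqxx /= /lQdiag /ss subn1. Qed.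
Lemma wq_diag th k : wq th k.+1 k.+1 = 0.
Proof. by rewrite /wq /LQblock ltnn eqxx. Qed.

Lemma lQ_xx th j m s : (1 <= s)%N -> lQ th j m.+1 s = xx th j (4 * m + s).
Proof.
move=> hs; rewrite /lQ /xx subn1 /=.
rewrite [in RHS](big_cat_nat _ (n := (4 * m).+1)) /=; [|lia|lia].
have H : \prod_((4 * m).+1 <= q < 4 * m + s) sin (th j q) =
         \prod_(1 <= i < s) sin (th j (4 * m + i)%N).
  rewrite -(add1n (4 * m)) big_addn.
  have -> : (4 * m + s - 4 * m = s)%N by lia.
  by apply: eq_big_nat => i _; rewrite addnC.
rewrite H; ring.
Qed.

Lemma zq_form th j m : (m.+1 < j)%N ->
  zq th j m.+1 = ((xx th j (4 * m + 1)) +i* (xx th j (4 * m + 2)))%C.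
Proof. by move=> h; rewrite /zq /LQblock h /= !lQ_xx. Qed.
Lemma wq_form th j m : (m.+1 < j)%N ->
  wq th j m.+1 = ((xx th j (4 * m + 3)) +i* (xx th j (4 * m + 4)))%C.
Proof. by move=> h; rewrite /wq /LQblock h /= !lQ_xx. Qed.

Lemma lQ_ext th1 th2 j m s : (forall q, (q <= 4 * (m - 1) + s)%N -> th1 j q = th2 j q) ->
  lQ th1 j m s = lQ th2 j m s.
Proof.
move=> H; rewrite /lQ H //; congr (_ * _ * _).
  by apply: eq_big_nat => q hq; rewrite H //; lia.
by apply: eq_big_nat => q hq; rewrite H //; lia.
Qed.

Lemma LQblock_ext th1 th2 j m a b : (0 < m)%N -> (forall q, (q <= 4 * m)%N -> th1 j q = th2 j q) ->
  LQblock th1 j m a b = LQblock th2 j m a b.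
Proof.
move=> m0 H; rewrite /LQblock; case: ifP => h1.
  rewrite (@lQ_ext th1 th2 j m 1) ?(@lQ_ext th1 th2 j m 2) ?(@lQ_ext th1 th2 j m 3)
          ?(@lQ_ext th1 th2 j m 4) // => q hq; apply: H; lia.
case: ifP => h2 //.
rewrite /lQdiag (eq_big_nat _ _ (F2 := fun p => sin (th2 j p))) //.
by move=> q hq; rewrite H //; move/eqP: h2 => ->; lia.
Qed.

Definition GZ th j k : R[i] :=
  \sum_(0 <= m < k) (zq th j m.+1 * (zq th k.+1 m.+1)^*%C + wq th j m.+1 * (wq th k.+1 m.+1)^*%C).
Definition GW th j k : R[i] :=
  \sum_(0 <= m < k) (zq th j m.+1 * (- (wq th k.+1 m.+1)^*%C)^*%C
                      + wq th j m.+1 * ((zq th k.+1 m.+1)^*%C)^*%C).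

Lemma rhoQz_split N th j k : (1 <= j <= N)%N -> (k < N)%N ->
  rhoQz N th j k.+1 = GZ th j k + zq th j k.+1 * (ss th k.+1 (4 * k))%:C%C.
Proof.
move=> hj hk; rewrite /rhoQz rhoQ_entry; [|lia|lia].
have e1 : ((2 * (j - 1)) %/ 2 = j - 1)%N by lia.
have e2 : ((2 * (j - 1)) %% 2 = 0)%N by lia.
have e3 : ((2 * (k.+1 - 1)) %/ 2 = k)%N by lia.
have e4 : ((2 * (k.+1 - 1)) %% 2 = 0)%N by lia.
have e5 : (j - 1).+1 = j by lia.
rewrite e1 e2 e3 e4 e5 -/(zq _ _ _) -/(wq _ _ _).
rewrite (big_cat_nat _ (n := k.+1)) //=.
have -> : \sum_(k.+1 <= m < N) (zq th j m.+1 * (zq th k.+1 m.+1)^*%C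
                               + wq th j m.+1 * (wq th k.+1 m.+1)^*%C) = 0.
  rewrite big_nat_cond big1 // => m /andP[/andP[hkm _] _].
  by rewrite (@zq_zero th k.+1 m.+1) ?(@wq_zero th k.+1 m.+1) ?conjc0 ?mulr0 ?addr0.
rewrite addr0 big_nat_recr //= -[LQblock th k.+1 k.+1 0 0]/(zq th k.+1 k.+1) -[LQblock th k.+1 k.+1 0 1]/(wq th k.+1 k.+1) zq_diag wq_diag conjC_real conjc0 mulr0 addr0.
by [].
Qed.

Lemma rhoQw_split N th j k : (1 <= j <= N)%N -> (k < N)%N ->
  rhoQw N th j k.+1 = GW th j k + wq th j k.+1 * (ss th k.+1 (4 * k))%:C%C.
Proof.
move=> hj hk; rewrite /rhoQw rhoQ_entry; [|lia|lia].
have e1 : ((2 * (j - 1)) %/ 2 = j - 1)%N by lia.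
have e2 : ((2 * (j - 1)) %% 2 = 0)%N by lia.
have e3 : ((2 * (k.+1 - 1)).+1 %/ 2 = k)%N by lia.
have e4 : ((2 * (k.+1 - 1)).+1 %% 2 = 1)%N by lia.
have e5 : (j - 1).+1 = j by lia.
rewrite e1 e2 e3 e4 e5 -/(zq _ _ _) -/(wq _ _ _).
under eq_bigr do rewrite LQ10 LQ11.
rewrite (big_cat_nat _ (n := k.+1)) //=.
have -> : \sum_(k.+1 <= m < N) (zq th j m.+1 * (- (wq th k.+1 m.+1)^*%C)^*%C
                      + wq th j m.+1 * ((zq th k.+1 m.+1)^*%C)^*%C) = 0.
  rewrite big_nat_cond big1 // => m /andP[/andP[hkm _] _].
  by rewrite (@zq_zero th k.+1 m.+1) ?(@wq_zero th k.+1 m.+1) ?conjc0 ?oppr0 ?conjc0 ?mulr0 ?addr0.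
rewrite addr0 big_nat_recr //= zq_diag wq_diag !conjc0 oppr0 conjc0 mulr0 add0r.
by rewrite conjC_real conjC_real.
Qed.


Definition GQ th j p : R :=
  match ((p - 1) %% 4)%N with
  | 0 => complex.Re (GZ th j ((p - 1) %/ 4))
  | 1 => complex.Im (GZ th j ((p - 1) %/ 4))
  | 2 => complex.Re (GW th j ((p - 1) %/ 4))
  | _ => complex.Im (GW th j ((p - 1) %/ 4))
  end%N.

Lemma coordQ_eq N th j p : (2 <= j <= N)%N -> (1 <= p <= 4 * (j - 1))%N ->
  coordQ N th j p = GQ th j p + ss th ((p - 1) %/ 4).+1 (4 * ((p - 1) %/ 4)) * xx th j p.
Proof.
move=> hj hp; rewrite /coordQ /GQ /= rhoQz_split ?rhoQw_split; [|lia|lia|lia|lia].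
rewrite zq_form ?wq_form; [|lia|lia].
rewrite !mulC_real.
case E: ((p - 1) %% 4)%N => [|[|[|r]]] /=.
- by rewrite ReD /= mulrC; congr (_ + _ * xx _ _ _); lia.
- by rewrite ImD /= mulrC; congr (_ + _ * xx _ _ _); lia.
- by rewrite ReD /= mulrC; congr (_ + _ * xx _ _ _); lia.
- by rewrite ImD /= mulrC; congr (_ + _ * xx _ _ _); lia.
Qed.

Lemma GQ_upd th j p j' p' t : (j' != ((p - 1) %/ 4).+1) ->
  (j' != j) || (4 * ((p - 1) %/ 4) < p')%N ->
  GQ (upd th j' p' t) j p = GQ th j p.
Proof.
move=> h1 h2; set k := ((p - 1) %/ 4)%N.
have E : forall m, (m < k)%N -> forall a b,
    LQblock (upd th j' p' t) j m.+1 a b = LQblock th j m.+1 a b /\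
    LQblock (upd th j' p' t) k.+1 m.+1 a b = LQblock th k.+1 m.+1 a b.
  move=> m hm a b; split; apply: LQblock_ext => // q hq; apply: upd_ne.
    by rewrite eq_sym; case/orP: h2 => [->//|h2]; apply/orP; right; lia.
  by rewrite eq_sym h1.
have EZ : GZ (upd th j' p' t) j k = GZ th j k.
  rewrite /GZ /zq /wq; apply: eq_big_nat => m /andP[_ hm].
  by rewrite !(proj1 (E m hm _ _)) !(proj2 (E m hm _ _)).
have EW : GW (upd th j' p' t) j k = GW th j k.
  rewrite /GW /zq /wq; apply: eq_big_nat => m /andP[_ hm].
  by rewrite !(proj1 (E m hm _ _)) !(proj2 (E m hm _ _)).
by rewrite /GQ -/k EZ EW.
Qed.

Lemma quat_part N (th : angles R) : (2 <= N)%N ->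
     (forall j p, (2 <= j <= N)%N -> (1 <= p <= 4 * (j - 1))%N ->
        0 < th j p < pi) ->
     `|\det (angle_jacobian (angle_idx 4 N) (coordQ N) th)| =
       \prod_(2 <= j < N.+1) \prod_(1 <= p < (4 * j - 4).+1)
          sin (th j p) ^+ (4 * N - p - 3).
Proof.
move=> N2 hth; rewrite (@generic R 4 N) //; last first.
  move=> j p hj hp; exists (fun th' => GQ th' j p).
  split; first by move=> th'; rewrite coordQ_eq.
  by move=> th' j' p' t h1 h2; rewrite GQ_upd.
apply: eq_big_nat => j hj.
by have -> : (4 * j - 4 = 4 * (j - 1))%N by lia.
Qed.
End Quat.

Theorem mainTheorem4 (R : realType) (N : nat) (hN : (2 <= N)%N) :
  (forall th : angles R,
     (forall j p, (2 <= j <= N)%N -> (1 <= p <= 2 * (j - 1))%N ->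
        0 < th j p < pi) ->
     `|\det (angle_jacobian (angle_idx 2 N) (coordC N) th)| =
       \prod_(2 <= j < N.+1) \prod_(1 <= p < (2 * j - 2).+1)
          sin (th j p) ^+ (2 * N - p - 1)) /\
  (forall th : angles R,
     (forall j p, (2 <= j <= N)%N -> (1 <= p <= 4 * (j - 1))%N ->
        0 < th j p < pi) ->
     `|\det (angle_jacobian (angle_idx 4 N) (coordQ N) th)| =
       \prod_(2 <= j < N.+1) \prod_(1 <= p < (4 * j - 4).+1)
          sin (th j p) ^+ (4 * N - p - 3)).
Proof.
split=> th h.
  exact: (@complex_part R N th hN h).
exact: (@quat_part R N th hN h).
Qed.
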